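(* Let ${\bm X}={\bm Y}$ be a finite pseudometric space with pseudometric $d_{\bm X}$ and let $C=d_{\bm X}$. Let $m^{\bm X}_\bullet,m^{\bm Y}_\bullet$ be irreducible and aperiodic Markov transition kernels on ${\bm X}$ with unique stationary distributions $\mu^{\bm X},\mu^{\bm Y}$. Define $C^{(0)}=C$ and $C^{(l)}_{ij}=d_{\mathrm W}(m^{\bm X}_i,m^{\bm Y}_j;C^{(l-1)})$ for $l\ge1$, and let $c=d^{(\infty)}_{\mathrm{WL}}\big(({\bm X},m^{\bm X}_\bullet,\mu^{\bm X}),({\bm Y},m^{\bm Y}_\bullet,\mu^{\bm Y});C\big)$. Then there exists $\rho\in[0,1)$, depending on $m^{\bm X}_\bullet$ and $m^{\bm Y}_\bullet$, such that for all $k\in\mathbb{N}$ and all $i,j$, $|C^{(k)}_{ij}-c|\le2\rho^k\|C\|_\infty$.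
   Context: $d_{\mathrm W}(\alpha,\beta;D)=\inf_{(X,Y)\in\mathcal{C}(\alpha,\beta)}\mathbb{E}\,D(X,Y)$ with $\mathcal{C}(\alpha,\beta)$ the set of couplings. For finite Markov chains $\mathcal{X}=({\bm X},m^{\bm X}_\bullet,\nu^{\bm X})$, $\mathcal{Y}=({\bm Y},m^{\bm Y}_\bullet,\nu^{\bm Y})$, a Markovian coupling is a (possibly time-inhomogeneous) Markov chain $(X_t,Y_t)_{t\in\mathbb{N}}$ on ${\bm X}\times{\bm Y}$ with $\mathrm{law}(X_0,Y_0)\in\mathcal{C}(\nu^{\bm X},\nu^{\bm Y})$ and, for all $t,x,y$, the conditional law of $(X_{t+1},Y_{t+1})$ given $(X_t,Y_t)=(x,y)$ in $\mathcal{C}(m^{\bm X}_x,m^{\bm Y}_y)$. $d^{(k)}_{\mathrm{WL}}(\mathcal{X},\mathcal{Y};C)=\inf\mathbb{E}\,C(X_k,Y_k)$ over Markovian couplings, and (for stationary chains) $d^{(\infty)}_{\mathrm{WL}}=\sup_{k}d^{(k)}_{\mathrm{WL}}=\lim_k d^{(k)}_{\mathrm{WL}}$. $\|C\|_\infty=\max_{i,j}|C_{ij}|$. *)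

(* Defs.v *)
From HB Require Import structures.
From mathcomp Require Import all_boot all_order all_algebra.
From mathcomp Require Import all_classical all_reals.
Set Implicit Arguments. Unset Strict Implicit. Unset Printing Implicit Defensive.
Import Order.TTheory GRing.Theory Num.Theory.
Local Open Scope ring_scope.
Local Open Scope classical_set_scope.

Section Defs.
Variables (R : realType) (T : finType).

Definition is_distr (a : T -> R) : Prop :=
  (forall x, 0 <= a x) /\ \sum_x a x = 1.

Definition is_kernel (m : T -> T -> R) : Prop := forall x, is_distr (m x).

Fixpoint kpow (m : T -> T -> R) (n : nat) : T -> T -> R :=
  match n with
  | 0 => fun x y => if x == y then 1 else 0
  | n'.+1 => fun x z => \sum_y kpow m n' x y * m y z
  end.

Definition irreducible (m : T -> T -> R) : Prop :=
  forall x y, exists n, 0 < kpow m n x y.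

(* period of every state is 1: gcd {n > 0 | m^n(x,x) > 0} = 1 *)
Definition aperiodic (m : T -> T -> R) : Prop :=
  forall x, forall d : nat,
    (forall n : nat, (0 < n)%N -> 0 < kpow m n x x -> (d %| n)%N) -> d = 1%N.

Definition stationary (m : T -> T -> R) (mu : T -> R) : Prop :=
  is_distr mu /\ forall y, \sum_x mu x * m x y = mu y.

Definition pseudometric (d : T -> T -> R) : Prop :=
  (forall x, d x x = 0) /\ (forall x y, d x y = d y x) /\
  (forall x y z, d x z <= d x y + d y z).

Definition coupling (a b : T -> R) (p : T -> T -> R) : Prop :=
  (forall x y, 0 <= p x y) /\
  (forall x, \sum_y p x y = a x) /\ (forall y, \sum_x p x y = b y).

Definition expect2 (p : T -> T -> R) (D : T -> T -> R) : R :=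
  \sum_x \sum_y p x y * D x y.

Definition dW (a b : T -> R) (D : T -> T -> R) : R :=
  inf [set r | exists p, coupling a b p /\ r = expect2 p D].

Fixpoint Citer (mX mY : T -> T -> R) (C : T -> T -> R) (l : nat) : T -> T -> R :=
  match l with
  | 0 => C
  | l'.+1 => fun i j => dW (mX i) (mY j) (Citer mX mY C l')
  end.

(* Markovian coupling: initial coupling p0 and time-inhomogeneous kernels
   K t x y x' y' = P((X_{t+1},Y_{t+1}) = (x',y') | (X_t,Y_t) = (x,y)) *)
Definition markov_coupling (mX mY : T -> T -> R) (nuX nuY : T -> R)
    (p0 : T -> T -> R) (K : nat -> T -> T -> T -> T -> R) : Prop :=
  coupling nuX nuY p0 /\ forall t x y, coupling (mX x) (mY y) (K t x y).

Fixpoint claw (p0 : T -> T -> R) (K : nat -> T -> T -> T -> T -> R) (t : nat)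
    : T -> T -> R :=
  match t with
  | 0 => p0
  | t'.+1 => fun x' y' => \sum_x \sum_y claw p0 K t' x y * K t' x y x' y'
  end.

Definition dWLk (mX mY : T -> T -> R) (nuX nuY : T -> R) (C : T -> T -> R)
    (k : nat) : R :=
  inf [set r | exists p0 K, markov_coupling mX mY nuX nuY p0 K /\
                            r = expect2 (claw p0 K k) C].

Definition dWLinf (mX mY : T -> T -> R) (nuX nuY : T -> R) (C : T -> T -> R) : R :=
  sup [set dWLk mX mY nuX nuY C k | k in [set: nat]].

Definition supnorm (C : T -> T -> R) : R :=
  \big[Num.max/0]_(i : T) \big[Num.max/0]_(j : T) `|C i j|.

End Defs.

(* Main.v *)
Require Import Defs.
From HB Require Import structures.
From mathcomp Require Import all_boot all_order all_algebra.
From mathcomp Require Import all_classical all_reals.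
From mathcomp Require Import ring lra zify.
Import Order.TTheory GRing.Theory Num.Theory.
Local Open Scope ring_scope.
Set Implicit Arguments. Unset Strict Implicit. Unset Printing Implicit Defensive.
Section Basics.
Variables (R : realType) (T : finType).
Implicit Types (a b : T -> R) (p h : T -> T -> R).

Lemma sum_ge_term (F : T -> R) x0 : (forall x, 0 <= F x) -> F x0 <= \sum_x F x.
Proof. by move=> F0; rewrite (bigD1 x0) //= lerDl sumr_ge0. Qed.

Definition lbh h : R := - \sum_x \sum_y `|h x y|.



Lemma lbh_le h x y : lbh h <= h x y.
Proof.
rewrite /lbh lerNl.
have H1 : - h x y <= `|h x y| by rewrite -normrN ler_norm.
apply: le_trans H1 _.
have H2 : `|h x y| <= \sum_y `|h x y|.
  by apply: (@sum_ge_term (fun y => `|h x y|)).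
apply: le_trans H2 _.
by apply: (@sum_ge_term (fun x => \sum_y `|h x y|)) => z; rewrite sumr_ge0.
Qed.

Lemma coupling_mass a b p : is_distr a -> coupling a b p ->
  \sum_x \sum_y p x y = 1.
Proof. by move=> [_ <-] [_ [Hm _]]; apply: eq_bigr => x _; rewrite Hm. Qed.

Lemma expect2_ge a b p h L : is_distr a -> coupling a b p ->
  (forall x y, L <= h x y) -> L <= expect2 p h.
Proof.
move=> Ha Hp HL; rewrite /expect2 -[L]mul1r -(coupling_mass Ha Hp) mulr_suml.
apply: ler_sum => x _; rewrite mulr_suml; apply: ler_sum => y _.
apply: ler_wpM2l; [by case: Hp | exact: HL].
Qed.

Lemma expect2_le a b p h U : is_distr a -> coupling a b p ->
  (forall x y, h x y <= U) -> expect2 p h <= U.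
Proof.
move=> Ha Hp HL; rewrite /expect2 -[U]mul1r -(coupling_mass Ha Hp) mulr_suml.
apply: ler_sum => x _; rewrite mulr_suml; apply: ler_sum => y _.
apply: ler_wpM2l; [by case: Hp | exact: HL].
Qed.

Lemma prod_coupling a b : is_distr a -> is_distr b ->
  coupling a b (fun x y => a x * b y).
Proof.
move=> [a0 a1] [b0 b1]; split; first by move=> x y; rewrite mulr_ge0.
split=> [x|y]; first by rewrite -mulr_sumr b1 mulr1.
by rewrite -mulr_suml a1 mul1r.
Qed.

Lemma dW_le a b h p : is_distr a -> coupling a b p -> dW a b h <= expect2 p h.
Proof.
move=> Ha Hp; apply: ge_inf; last by exists p.
exists (lbh h) => r [q [Hq ->]]; exact: expect2_ge Ha Hq (lbh_le h).
Qed.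

Lemma dW_ge a b h M : is_distr a -> is_distr b ->
  (forall p, coupling a b p -> M <= expect2 p h) -> M <= dW a b h.
Proof.
move=> Ha Hb HM; apply: lb_le_inf.
  by exists (expect2 (fun x y => a x * b y) h), (fun x y => a x * b y); split => //; exact: prod_coupling.
by move=> r [q [Hq ->]]; exact: HM.
Qed.

Lemma dW_approx a b h e : is_distr a -> is_distr b -> 0 < e ->
  exists p, coupling a b p /\ expect2 p h <= dW a b h + e.
Proof.
move=> Ha Hb He.
have Hi : has_inf [set r | exists p, coupling a b p /\ r = expect2 p h].
  split.
    by exists (expect2 (fun x y => a x * b y) h), (fun x y => a x * b y); split => //; exact: prod_coupling.
  exists (lbh h) => r [q [Hq ->]]; exact: expect2_ge Ha Hq (lbh_le h).
have [r [q [Hq ->]] Hr] := inf_adherent He Hi.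
by exists q; split => //; apply: ltW.
Qed.

End Basics.
Section Iter.
Variables (R : realType) (T : finType) (mX mY : T -> T -> R).
Hypotheses (HX : is_kernel mX) (HY : is_kernel mY).

Lemma T_le h U i j : (forall x y, h x y <= U) -> dW (mX i) (mY j) h <= U.
Proof.
move=> HU; apply: le_trans (dW_le h (HX i) (prod_coupling (HX i) (HY j))) _.
exact: expect2_le (HX i) (prod_coupling (HX i) (HY j)) HU.
Qed.

Lemma T_ge h L i j : (forall x y, L <= h x y) -> L <= dW (mX i) (mY j) h.
Proof.
move=> HL; apply: dW_ge (HX i) (HY j) _ => p Hp; exact: expect2_ge (HX i) Hp HL.
Qed.

Lemma Citer_bounds d L U : (forall x y, L <= d x y <= U) ->
  forall n x y, L <= Citer mX mY d n x y <= U.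
Proof.
move=> Hd; elim=> [|n IH] x y //=.
by rewrite T_le ?T_ge // => a b; case/andP: (IH a b).
Qed.

End Iter.

Definition D0 {R : realType} {T : finType} (i i' : T) : R := if i == i' then 0 else 1.

Section Gamma.
Variables (R : realType) (T : finType).

Definition Gam (m : T -> T -> R) (h : T -> T -> R) i i' : R :=
  if i == i' then 0 else \sum_x \sum_x' m i x * m i' x' * h x x'.
Definition Dn m n := iter n (Gam m) D0.

End Gamma.

Section LemmaA.
Variables (R : realType) (T : finType) (mX mY : T -> T -> R).
Hypotheses (HX : is_kernel mX) (HY : is_kernel mY).

Lemma lemmaAX (d : T -> T -> R) (B : R) : (forall x x' y, d x y - d x' y <= D0 x x' * B) ->
  forall n x x' y, Citer mX mY d n x y - Citer mX mY d n x' y <= Dn mX n x x' * B.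
Proof.
move=> H0; elim=> [|n IH] i i' j //=.
rewrite /Gam; case: eqP => [->|/eqP Hii']; first by rewrite subrr mul0r.
rewrite lerBlDr addrC -lerBlDr.
apply: dW_ge (HX i') (HY j) _ => p Hp.
have [Hp0 [Hp1 Hp2]] := Hp.
set g := Citer mX mY d n.
have E1 : dW (mX i) (mY j) g <= \sum_x mX i x * \sum_x' \sum_y p x' y * g x y.
  apply: le_trans (dW_le g (HX i) (prod_coupling (HX i) (HY j))) _.
  rewrite /expect2 le_eqVlt; apply/orP; left; apply/eqP.
  apply: eq_bigr => x _; rewrite exchange_big mulr_sumr; apply: eq_bigr => y _.
  by rewrite -Hp2 mulr_sumr mulr_suml mulr_sumr; apply: eq_bigr => x' _; ring.
have E2 : expect2 p g = \sum_x mX i x * \sum_x' \sum_y p x' y * g x' y.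
  by rewrite -mulr_suml (proj2 (HX i)) mul1r.
have E3 : (\sum_x \sum_x' mX i x * mX i' x' * Dn mX n x x') * B
   = \sum_x mX i x * \sum_x' \sum_y p x' y * (Dn mX n x x' * B).
  rewrite mulr_suml; apply: eq_bigr => x _; rewrite mulr_suml mulr_sumr.
  by apply: eq_bigr => x' _; rewrite -Hp1 -!mulrA mulr_suml.
rewrite E2 E3 lerBlDr -big_split /=.
apply: le_trans E1 _; apply: ler_sum => x _.
rewrite -mulrDr; apply: ler_wpM2l; first by case: (HX i) => ->.
rewrite -big_split /=; apply: ler_sum => x' _.
rewrite -big_split /=; apply: ler_sum => y _.
rewrite -mulrDr; apply: ler_wpM2l; first exact: Hp0.
by rewrite addrC -lerBlDr; apply: IH.
Qed.

Lemma lemmaAY (d : T -> T -> R) (B : R) : (forall x y y', d x y - d x y' <= D0 y y' * B) ->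
  forall n x y y', Citer mX mY d n x y - Citer mX mY d n x y' <= Dn mY n y y' * B.
Proof.
move=> H0; elim=> [|n IH] i j j' //=.
rewrite /Gam; case: eqP => [->|/eqP Hjj']; first by rewrite subrr mul0r.
rewrite lerBlDr addrC -lerBlDr.
apply: dW_ge (HX i) (HY j') _ => p Hp.
have [Hp0 [Hp1 Hp2]] := Hp.
set g := Citer mX mY d n.
have E1 : dW (mX i) (mY j) g <= \sum_y mY j y * \sum_x \sum_y' p x y' * g x y.
  apply: le_trans (dW_le g (HX i) (prod_coupling (HX i) (HY j))) _.
  rewrite /expect2 le_eqVlt; apply/orP; left; apply/eqP.
  rewrite exchange_big; apply: eq_bigr => y _; rewrite mulr_sumr; apply: eq_bigr => x _.
  by rewrite -Hp1 !mulr_suml mulr_sumr; apply: eq_bigr => y' _; ring.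
have E2 : expect2 p g = \sum_y mY j y * \sum_x \sum_y' p x y' * g x y'.
  by rewrite -mulr_suml (proj2 (HY j)) mul1r.
have E3 : (\sum_y \sum_y' mY j y * mY j' y' * Dn mY n y y') * B
   = \sum_y mY j y * \sum_x \sum_y' p x y' * (Dn mY n y y' * B).
  rewrite mulr_suml; apply: eq_bigr => y _; rewrite mulr_suml [in RHS]exchange_big mulr_sumr.
  by apply: eq_bigr => y' _; rewrite -Hp2 -!mulrA mulr_suml.
rewrite E2 E3 lerBlDr -big_split /=.
apply: le_trans E1 _; apply: ler_sum => y _.
rewrite -mulrDr; apply: ler_wpM2l; first by case: (HY j) => ->.
rewrite -big_split /=; apply: ler_sum => x _.
rewrite -big_split /=; apply: ler_sum => y' _.
rewrite -mulrDr; apply: ler_wpM2l; first exact: Hp0.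
by rewrite addrC -lerBlDr; apply: IH.
Qed.

End LemmaA.
Section Kpow.
Variables (R : realType) (T : finType) (m : T -> T -> R).
Hypothesis (Hm : is_kernel m).

Lemma kpow_ge0 n x y : 0 <= kpow m n x y.
Proof.
elim: n x y => [|n IH] x y /=; first by case: eqP.
by apply: sumr_ge0 => z _; rewrite mulr_ge0 //; case: (Hm z) => ->.
Qed.

Lemma kpow_sum1 n x : \sum_y kpow m n x y = 1.
Proof.
elim: n x => [|n IH] x /=.
  by rewrite (bigD1 x) //= eqxx big1 ?addr0 // => y /negbTE; rewrite eq_sym => ->.
rewrite exchange_big /= -(IH x); apply: eq_bigr => y _.
by rewrite -mulr_sumr (proj2 (Hm y)) mulr1.
Qed.

Lemma kpow1 x y : kpow m 1 x y = m x y.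
Proof.
rewrite /= (bigD1 x) //= eqxx mul1r big1 ?addr0 // => z /negbTE.
by rewrite eq_sym => ->; rewrite mul0r.
Qed.

Lemma kpowD n p x z : kpow m (n + p) x z = \sum_y kpow m n x y * kpow m p y z.
Proof.
elim: p z => [|p IH] z.
  rewrite addn0 /= (bigD1 z) //= eqxx mulr1 big1 ?addr0 // => y /negbTE ->.
  by rewrite mulr0.
rewrite addnS /=.
under eq_bigr => w _ do rewrite IH mulr_suml.
rewrite exchange_big /=; apply: eq_bigr => y _.
by rewrite mulr_sumr; apply: eq_bigr => w _; rewrite mulrA.
Qed.

Lemma kpowS_l n x z : kpow m n.+1 x z = \sum_y m x y * kpow m n y z.
Proof.
by rewrite -add1n kpowD; apply: eq_bigr => y _; rewrite kpow1.
Qed.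

Lemma kpowD_ge n p x y z : kpow m n x y * kpow m p y z <= kpow m (n + p) x z.
Proof.
rewrite kpowD; apply: (@sum_ge_term _ _ (fun y => kpow m n x y * kpow m p y z)).
by move=> w; rewrite mulr_ge0 // kpow_ge0.
Qed.

Lemma distr_dot_le1 (a b : T -> R) : is_distr a -> is_distr b -> \sum_z a z * b z <= 1.
Proof.
move=> [a0 a1] [b0 b1]; rewrite -a1; apply: ler_sum => z _.
rewrite ler_piMr //; rewrite -b1.
exact: (@sum_ge_term _ _ b).
Qed.

Lemma kpow_distr n x : is_distr (kpow m n x).
Proof. by split; [move=> y; exact: kpow_ge0 | exact: kpow_sum1]. Qed.

Lemma Dn_le_overlap n i i' :
  Dn m n i i' <= 1 - \sum_z kpow m n i z * kpow m n i' z.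
Proof.
elim: n i i' => [|n IH] i i'.
  rewrite /Dn /= /D0 (bigD1 i) //= eqxx mul1r big1 ?addr0; last first.
    by move=> z /negbTE; rewrite eq_sym => ->; rewrite mul0r.
  by rewrite eq_sym; case: eqP => _; rewrite ?subrr ?subr0.
rewrite /Dn iterS -/(Dn m n) /Gam.
case: eqP => [_|_].
  by rewrite subr_ge0; apply: distr_dot_le1; apply: kpow_distr.
have E : \sum_z kpow m n.+1 i z * kpow m n.+1 i' z =
   \sum_x \sum_x' m i x * m i' x' * \sum_z kpow m n x z * kpow m n x' z.
  under eq_bigr => z _ do rewrite !kpowS_l mulr_suml.
  rewrite exchange_big; apply: eq_bigr => x _.
  under eq_bigr => z _ do rewrite mulr_sumr.
  rewrite exchange_big; apply: eq_bigr => x' _.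
  by rewrite mulr_sumr; apply: eq_bigr => z _; ring.
have E1 : \sum_x \sum_x' m i x * m i' x' = 1.
  rewrite -(proj2 (Hm i)); apply: eq_bigr => x _.
  by rewrite -mulr_sumr (proj2 (Hm i')) mulr1.
rewrite E -{1}E1 -sumrB; apply: ler_sum => x _.
rewrite -sumrB; apply: ler_sum => x' _.
rewrite -[X in _ <= X - _]mulr1 -mulrBr; apply: ler_wpM2l; last exact: IH.
by rewrite mulr_ge0 //; [case: (Hm i) | case: (Hm i')].
Qed.

End Kpow.
Section NumTh.
Variables (R : realType) (T : finType) (m : T -> T -> R).
Hypotheses (Hm : is_kernel m) (Hirr : irreducible m) (Hap : aperiodic m).

Section Fix.
Variable x : T.
Let S n := (0 < n)%N && (0 < kpow m n x x).

Lemma S_add a b : S a -> S b -> S (a + b).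
Proof.
case/andP=> a0 ka /andP [b0 kb]; apply/andP; split; first by rewrite addn_gt0 a0.
apply: lt_le_trans (kpowD_ge Hm a b x x x); exact: mulr_gt0.
Qed.

Lemma S_mul a k : S a -> (0 < k)%N -> S (k * a).
Proof.
move=> Sa; elim: k => [//|k IH] _.
case: k IH => [|k] IH; first by rewrite mul1n.
by rewrite mulSn S_add // IH.
Qed.

Lemma S_nonempty : exists s, S s.
Proof.
have [y my] : exists y, 0 < m x y.
  apply: contrapT => H.
  have : \sum_y m x y = 0.
    apply: big1 => y _; apply/eqP; rewrite eq_le (proj1 (Hm x) y) andbT leNgt.
    by apply/negP => hy; apply: H; exists y.
  by rewrite (proj2 (Hm x)) => /eqP; rewrite oner_eq0.
have [n kn] := Hirr y x.
exists (1 + n); apply/andP; split => //.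
apply: lt_le_trans (kpowD_ge Hm 1 n x y x); rewrite kpow1 //; exact: mulr_gt0.
Qed.

Lemma consec_aux g : (0 < g)%N -> (exists s, S s /\ S (s + g)) ->
  exists s, S s /\ S (s + 1).
Proof.
elim/ltn_ind: g => g IH g0 [s [Ss Ssg]].
case: (pselect (forall n, S n -> (g %| n)%N)) => [Hall|].
  have g1 : g = 1%N.
    have := @Hap x g; apply => n n0 kn; apply: Hall; exact/andP.
  by exists s; rewrite -g1.
move=> /existsNP [n /not_implyP [Sn ndiv]].
have s0 : (0 < s)%N by case/andP: Ss.
set r := (n %% g)%N; set q := (n %/ g)%N.
have Hn : n = (q * g + r)%N by rewrite /q /r -divn_eq.
have rg : (r < g)%N by rewrite /r ltn_pmod.
have r0 : (0 < r)%N.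
  rewrite lt0n; apply/negP => /eqP r0; apply: ndiv; apply/dvdnP; exists q; lia.
have Sq1s : S ((q.+1) * s) by apply: S_mul.
have SA : S (n + q.+1 * s) by apply: S_add.
have SB : S (q.+1 * (s + g)) by apply: S_mul.
have SB' : S (n + q.+1 * s + (g - r)).
  by have -> : (n + q.+1 * s + (g - r) = q.+1 * (s + g))%N by lia.
have [s' [Ss' Hs']] := IH (g - r)%N ltac:(lia) ltac:(lia)
  (ex_intro _ (n + q.+1 * s)%N (conj SA SB')).
by exists s'.
Qed.

Lemma consec : exists s, S s /\ S (s + 1).
Proof.
have [s Ss] := S_nonempty.
apply: (@consec_aux s); first by case/andP: Ss.
by exists s; split => //; rewrite addnn -mul2n; apply: S_mul.
Qed.

End Fix.

Lemma meet_pos i i' : exists n z, 0 < kpow m n i z /\ 0 < kpow m n i' z.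
Proof.
have [a ka] := Hirr i' i.
case: a ka => [|a] ka.
  by exists 0%N, i; split => //=; rewrite eqxx.
have [s [Ss Ss1]] := consec i.
exists (a.+1 * (s + 1))%N, i; split.
  by case/andP: (S_mul Ss1 (ltn0Sn a)).
rewrite (_ : (a.+1 * (s + 1) = a.+1 + a.+1 * s)%N); last by lia.
apply: lt_le_trans (kpowD_ge Hm _ _ i' i i); apply: mulr_gt0 => //.
by case/andP: (S_mul Ss (ltn0Sn a)).
Qed.

End NumTh.
Section DnProps.
Variables (R : realType) (T : finType) (m : T -> T -> R).
Hypothesis (Hm : is_kernel m).

Lemma mm_ge0 i i' x x' : 0 <= m i x * m i' x'.
Proof. by rewrite mulr_ge0 //; [case: (Hm i) | case: (Hm i')]. Qed.

Lemma Gam_mono (h1 h2 : T -> T -> R) : (forall x y, h1 x y <= h2 x y) ->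
  forall i i', Gam m h1 i i' <= Gam m h2 i i'.
Proof.
move=> H i i'; rewrite /Gam; case: eqP => // _.
apply: ler_sum => x _; apply: ler_sum => x' _; apply: ler_wpM2l => //; exact: mm_ge0.
Qed.

Lemma iter_mono (h1 h2 : T -> T -> R) : (forall x y, h1 x y <= h2 x y) ->
  forall N i i', iter N (Gam m) h1 i i' <= iter N (Gam m) h2 i i'.
Proof. by move=> H; elim=> [|N IH] i i' //=; apply: Gam_mono. Qed.

Lemma iter_scale (h : T -> T -> R) c N i i' :
  iter N (Gam m) (fun x y => c * h x y) i i' = c * iter N (Gam m) h i i'.
Proof.
elim: N i i' => [|N IH] i i' //=.
rewrite /Gam; case: eqP => _; first by rewrite mulr0.
rewrite mulr_sumr; apply: eq_bigr => x _; rewrite mulr_sumr; apply: eq_bigr => x' _.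
by rewrite IH; ring.
Qed.

Lemma Dn_ge0 n i i' : 0 <= Dn m n i i'.
Proof.
elim: n i i' => [|n IH] i i'; first by rewrite /Dn /= /D0; case: eqP.
rewrite /Dn iterS /Gam; case: eqP => // _.
by apply: sumr_ge0 => x _; apply: sumr_ge0 => x' _; rewrite mulr_ge0 // ?mm_ge0 // IH.
Qed.

Lemma Dn_le1 n i i' : Dn m n i i' <= 1.
Proof.
elim: n i i' => [|n IH] i i'; first by rewrite /Dn /= /D0; case: eqP.
rewrite /Dn iterS /Gam; case: eqP => // _.
have E1 : \sum_x \sum_x' m i x * m i' x' = 1.
  rewrite -(proj2 (Hm i)); apply: eq_bigr => x _.
  by rewrite -mulr_sumr (proj2 (Hm i')) mulr1.
rewrite -E1; apply: ler_sum => x _; apply: ler_sum => x' _.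
by rewrite ler_piMr ?mm_ge0 //; exact: IH.
Qed.

Lemma Dn_diag n i : Dn m n i i = 0.
Proof. by case: n => [|n]; rewrite /Dn ?iterS /= /D0 /Gam eqxx. Qed.

Lemma Dn_le_MD0 n M x x' : (forall y y', Dn m n y y' <= M) ->
  Dn m n x x' <= M * D0 x x'.
Proof.
move=> H; rewrite /D0; case: eqP => [->|_]; first by rewrite Dn_diag mulr0.
by rewrite mulr1.
Qed.

Lemma Dn_block N n a M i i' : (forall y y', Dn m N y y' <= a) ->
  (forall y y', Dn m n y y' <= M) -> 0 <= M -> Dn m (N + n) i i' <= M * a.
Proof.
move=> HN Hn M0; rewrite /Dn iterD.
apply: le_trans (iter_mono (fun y y' => Dn_le_MD0 y y' Hn) N i i') _.
rewrite iter_scale; apply: ler_wpM2l => //; exact: HN.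
Qed.

Lemma Dn_anti n k i i' : Dn m (n + k) i i' <= Dn m n i i'.
Proof.
rewrite /Dn iterD; apply: iter_mono => y y'.
rewrite -[X in _ <= X]mul1r; apply: Dn_le_MD0 => z z'; exact: Dn_le1.
Qed.

Lemma Dn_geom N a : (forall y y', Dn m N y y' <= a) -> 0 <= a ->
  forall q r i i', Dn m (q * N + r) i i' <= a ^+ q.
Proof.
move=> HN a0; elim=> [|q IH] r i i'; first by rewrite mul0n add0n expr0 Dn_le1.
rewrite mulSn -addnA exprSr; apply: Dn_block => //; exact: exprn_ge0.
Qed.

Hypotheses (Hirr : irreducible m) (Hap : aperiodic m).

Lemma exists_Na : exists N a, (0 < N)%N /\ 0 <= a < 1 /\
  forall n, (N <= n)%N -> forall i i', Dn m n i i' <= a.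
Proof.
have Hp : forall p : T * T, exists n, Dn m n p.1 p.2 < 1.
  case=> i i' /=; have [n [z [k1 k2]]] := meet_pos Hm Hirr Hap i i'.
  exists n; apply: le_lt_trans (Dn_le_overlap Hm n i i') _.
  rewrite ltrBlDr ltrDl.
  apply: lt_le_trans (@sum_ge_term _ _ (fun z => kpow m n i z * kpow m n i' z) z _).
    exact: mulr_gt0.
  by move=> w; rewrite mulr_ge0 // kpow_ge0.
have [f Hf] := choice Hp.
set N := (\max_(p : T * T) f p).+1.
have HfN : forall n p, (N <= n)%N -> Dn m n p.1 p.2 < 1.
  move=> n p Hn; apply: le_lt_trans (Hf p).
  have -> : n = (f p + (n - f p))%N.
    have : (f p <= \max_(p : T * T) f p)%N by apply: leq_bigmax.
    rewrite -/N in Hn; lia.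
  exact: Dn_anti.
exists N, (\big[Num.max/0]_(p : T * T) Dn m N p.1 p.2); split => //; split.
  apply/andP; split; first by apply: bigmax_ge_id.
  by apply: bigmax_lt => // p _; apply: HfN.
move=> n Hn i i'.
apply: le_trans (_ : Dn m N (i, i').1 (i, i').2 <= _).
  rewrite (_ : n = (N + (n - N))%N); last by lia.
  exact: (Dn_anti N (n - N) i i').
exact: (le_bigmax _ (fun p : T * T => Dn m N p.1 p.2)).
Qed.

End DnProps.
Section WL.
Variables (R : realType) (T : finType) (mX mY : T -> T -> R) (muX muY : T -> R).
Hypotheses (HX : is_kernel mX) (HY : is_kernel mY)
  (SX : stationary mX muX) (SY : stationary mY muY).

Let MC p0 K := markov_coupling mX mY muX muY p0 K.

Lemma claw_step (p0 : T -> T -> R) (K : nat -> T -> T -> T -> T -> R) t (h : T -> T -> R) :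
  expect2 (claw p0 K t.+1) h = \sum_x \sum_y claw p0 K t x y * expect2 (K t x y) h.
Proof.
rewrite /expect2 /=.
under eq_bigr => x' _ do under eq_bigr => y' _ do rewrite mulr_suml.
under eq_bigr => x' _ do rewrite exchange_big /=.
rewrite exchange_big /=; apply: eq_bigr => x _.
under eq_bigr => x' _ do under eq_bigr => y' _ do rewrite mulr_suml.
under eq_bigr => x' _ do rewrite exchange_big /=.
rewrite exchange_big /=; apply: eq_bigr => y _.
rewrite mulr_sumr; apply: eq_bigr => x' _; rewrite mulr_sumr; apply: eq_bigr => y' _.
by rewrite mulrA.
Qed.

Lemma claw_coupling (p0 : T -> T -> R) (K : nat -> T -> T -> T -> T -> R) : MC p0 K -> forall t, coupling muX muY (claw p0 K t).
Proof.
move=> [H0 HK]; elim=> [|t [IH0 [IH1 IH2]]] //=.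
split.
  move=> x' y'; apply: sumr_ge0 => x _; apply: sumr_ge0 => y _.
  by rewrite mulr_ge0 //; case: (HK t x y).
split.
  move=> x'; rewrite exchange_big /= -(proj2 SX x'); apply: eq_bigr => x _.
  rewrite exchange_big /= -IH1 mulr_suml; apply: eq_bigr => y _.
  by rewrite -mulr_sumr; case: (HK t x y) => _ [-> _].
move=> y'; rewrite exchange_big /= -(proj2 SY y').
rewrite [RHS](_ : _ = \sum_x \sum_y claw p0 K t x y * mY y y'); last first.
  by rewrite exchange_big; apply: eq_bigr => y _; rewrite -IH2 mulr_suml.
apply: eq_bigr => x _; rewrite exchange_big; apply: eq_bigr => y _.
by rewrite -mulr_sumr; case: (HK t x y) => _ [_ ->].
Qed.




Lemma MC_exists : exists p0 K, MC p0 K.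
Proof.
exists (fun x y => muX x * muY y), (fun t x y => fun x' y' => mX x x' * mY y y').
split; first exact: prod_coupling (proj1 SX) (proj1 SY).
move=> t x y; exact: prod_coupling (HX x) (HY y).
Qed.

Lemma dWLk_le (d : T -> T -> R) k p0 K : MC p0 K ->
  dWLk mX mY muX muY d k <= expect2 (claw p0 K k) d.
Proof.
move=> HMC; apply: ge_inf; last by exists p0, K.
exists (lbh d) => r [q0 [Q [HQ ->]]].
exact: expect2_ge (proj1 SX) (claw_coupling HQ k) (lbh_le d).
Qed.

Lemma dWLk_ge (d : T -> T -> R) k M :
  (forall p0 K, MC p0 K -> M <= expect2 (claw p0 K k) d) ->
  M <= dWLk mX mY muX muY d k.
Proof.
move=> H; apply: lb_le_inf.
  have [p0 [K HK]] := MC_exists.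
  by exists (expect2 (claw p0 K k) d), p0, K.
by move=> r [q0 [Q [HQ ->]]]; exact: H.
Qed.

Lemma lower_chain (d : T -> T -> R) s : forall t p0 K, MC p0 K ->
  expect2 (claw p0 K t) (Citer mX mY d s) <= expect2 (claw p0 K (t + s)) d.
Proof.
elim: s => [|s IH] t p0 K HMC; first by rewrite addn0.
rewrite -addSnnS; apply: le_trans (IH _ _ _ HMC).
rewrite claw_step /expect2; apply: ler_sum => x _; apply: ler_sum => y _.
apply: ler_wpM2l; first by case: (claw_coupling HMC t).
by apply: dW_le (HX x) _; case: HMC => _ /(_ t x y).
Qed.

Lemma upper_construct (d : T -> T -> R) k M e : 0 < e ->
  (forall x y, Citer mX mY d k x y <= M) ->
  exists p0 K, MC p0 K /\ expect2 (claw p0 K k) d <= M + k%:R * e.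
Proof.
move=> e0 HM.
set g := Citer mX mY d.
have Hc : forall txy : nat * T * T, exists p,
  coupling (mX txy.1.2) (mY txy.2) p /\
  expect2 p (g (k - txy.1.1.+1)%N) <= dW (mX txy.1.2) (mY txy.2) (g (k - txy.1.1.+1)%N) + e.
  move=> [[t x] y] /=; exact: dW_approx (HX x) (HY y) e0.
have [f Hf] := choice Hc.
set p0 := fun x y => muX x * muY y.
set K := fun t x y => f (t, x, y).
have HMC : MC p0 K.
  split; first exact: prod_coupling (proj1 SX) (proj1 SY).
  by move=> t x y; case: (Hf (t, x, y)).
exists p0, K; split => //.
have Hind : forall t, (t <= k)%N ->
    expect2 (claw p0 K t) (g (k - t)%N) <= M + t%:R * e.
  elim=> [|t IH] Ht.
    rewrite subn0 mul0r addr0; apply: expect2_le (proj1 SX) (claw_coupling HMC 0) _.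
    exact: HM.
  rewrite claw_step.
  have Hle : \sum_x \sum_y claw p0 K t x y * expect2 (K t x y) (g (k - t.+1)%N)
      <= \sum_x \sum_y claw p0 K t x y * (g (k - t)%N x y + e).
    apply: ler_sum => x _; apply: ler_sum => y _.
    apply: ler_wpM2l; first by case: (claw_coupling HMC t).
    have [_ H2] := Hf (t, x, y); rewrite /K; apply: le_trans H2 _.
    by rewrite -(subnSK Ht).
  apply: le_trans Hle _.
  have E : \sum_x \sum_y claw p0 K t x y * (g (k - t)%N x y + e)
     = expect2 (claw p0 K t) (g (k - t)%N) + e.
    rewrite /expect2 -[X in _ + X]mul1r -(coupling_mass (proj1 SX) (claw_coupling HMC t)).
    rewrite mulr_suml -big_split /=; apply: eq_bigr => x _.
    rewrite mulr_suml -big_split /=; apply: eq_bigr => y _; ring.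
  rewrite E -natr1 mulrDl mul1r addrA lerD2r; apply: IH; exact: ltnW.
by have := Hind k (leqnn k); rewrite subnn.
Qed.

Lemma dWLk_upper (d : T -> T -> R) k M :
  (forall x y, Citer mX mY d k x y <= M) -> dWLk mX mY muX muY d k <= M.
Proof.
move=> HM; apply/ler_addgt0Pr => e e0.
have e'0 : 0 < e / (k.+1)%:R by rewrite divr_gt0 // ltr0n.
have [p0 [K [HMC Hle]]] := upper_construct e'0 HM.
apply: le_trans (dWLk_le d k HMC) _; apply: le_trans Hle _.
rewrite lerD2l mulrA ler_pdivrMr ?ltr0n // -natr1 mulrDr mulr1 mulrC lerDl.
exact: ltW.
Qed.

Lemma Citer_shift (d : T -> T -> R) s k :
  Citer mX mY d (s + k) = Citer mX mY (Citer mX mY d k) s.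
Proof. by elim: s => [|s IH] //=; rewrite IH. Qed.

Lemma claw_shift (p0 : T -> T -> R) (K : nat -> T -> T -> T -> T -> R) s t x y :
  claw (claw p0 K s) (fun u => K (s + u)%N) t x y = claw p0 K (s + t) x y.
Proof.
elim: t x y => [|t IH] x y; first by rewrite addn0.
rewrite addnS /=; apply: eq_bigr => x' _; apply: eq_bigr => y' _; by rewrite IH.
Qed.

Lemma dWLk_shift (d : T -> T -> R) k' k : (k' <= k)%N ->
  dWLk mX mY muX muY d k' <= dWLk mX mY muX muY d k.
Proof.
move=> Hk; apply: dWLk_ge => p0 K HMC.
have HMC' : MC (claw p0 K (k - k')) (fun u => K (k - k' + u)%N).
  by split; [exact: claw_coupling | move=> t x y; case: HMC => _; apply].
apply: le_trans (dWLk_le d k' HMC') _.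
rewrite /expect2 le_eqVlt; apply/orP; left; apply/eqP.
apply: eq_bigr => x _; apply: eq_bigr => y _; rewrite claw_shift subnK //.
Qed.

Lemma le_nlbh (h : T -> T -> R) x y : h x y <= - lbh h.
Proof.
have := lbh_le (fun x y => - h x y) x y.
have -> : lbh (fun x y => - h x y) = lbh h.
  by rewrite /lbh; congr (- _); apply: eq_bigr => a _; apply: eq_bigr => b _; rewrite normrN.
by rewrite lerNr.
Qed.

Local Open Scope classical_set_scope.
Lemma c_close (d : T -> T -> R) k G D :
  (forall x y, G - D <= Citer mX mY d k x y <= G + D) ->
  `|G - dWLinf mX mY muX muY d| <= D.
Proof.
move=> HB.
set S := [set dWLk mX mY muX muY d k' | k' in [set: nat]].
have Sne : S !=set0 by exists (dWLk mX mY muX muY d 0), 0%N.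
have Sub : forall k', dWLk mX mY muX muY d k' <= - lbh d.
  move=> k'; apply: dWLk_upper => x y.
  have := Citer_bounds HX HY (L := lbh d) (U := - lbh d) (d := d) _ k' x y.
  by case/(_ _)/andP => // a b; rewrite lbh_le le_nlbh.
have HS : has_sup S.
  by split => //; exists (- lbh d) => r [k' _ <-]; exact: Sub.
have Hlow : G - D <= dWLinf mX mY muX muY d.
  apply: le_trans (_ : dWLk mX mY muX muY d k <= _); last first.
    by apply: sup_upper_bound => //; exists k.
  apply: dWLk_ge => p0 K HMC.
  apply: le_trans (lower_chain d k 0 HMC).
  apply: expect2_ge (proj1 SX) (claw_coupling HMC 0) _ => x y.
  by case/andP: (HB x y).
have Hup : dWLinf mX mY muX muY d <= G + D.
  apply: ge_sup => // r [k' _ <-].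
  case: (leqP k' k) => Hk.
    apply: le_trans (dWLk_shift d Hk) _; apply: dWLk_upper => x y.
    by case/andP: (HB x y).
  apply: dWLk_upper => x y.
  have -> : k' = ((k' - k) + k)%N by rewrite subnK // ltnW.
  rewrite Citer_shift.
  have := Citer_bounds HX HY (L := G - D) (U := G + D) (d := Citer mX mY d k) HB (k' - k) x y.
  by case/andP.
rewrite ler_norml; apply/andP; split; lra.
Qed.

End WL.


Lemma arith1 k N : (0 < N)%N -> (k %/ N = 0)%N -> (k <= 2 * N)%N.
Proof.
move=> N0 q0; have := ltn_pmod k N0; have := divn_eq k N; rewrite q0.
move: (k %% N)%N => r -> h; lia.
Qed.
Lemma arith2 k N : (0 < N)%N -> (0 < k %/ N)%N -> (k <= 2 * N * (k %/ N))%N.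
Proof.
move=> N0 qpos; have := ltn_pmod k N0; have := divn_eq k N.
move: qpos; move: (k %/ N)%N (k %% N)%N => q r q0 -> rN.
have : (N <= N * q)%N by rewrite leq_pmulr.
rewrite -mulnA mulnC (mulnC q N) => h; lia.
Qed.

Section Arith.
Variable R : realType.

Lemma bernoulli (x : R) n : 0 <= x -> x <= 1 -> 1 - n%:R * x <= (1 - x) ^+ n.
Proof.
move=> x0 x1; elim: n => [|n IH]; first by rewrite mul0r subr0 expr0.
rewrite exprSr -natr1.
have h1 : (1 - n%:R * x) * (1 - x) <= (1 - x) ^+ n * (1 - x).
  by apply: ler_wpM2r => //; rewrite subr_ge0.
apply: le_trans h1; have : 0 <= n%:R * x * x by rewrite !mulr_ge0.
lra.
Qed.

Lemma expr_mono (u v : R) n : 0 <= u -> u <= v -> u ^+ n <= v ^+ n.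
Proof.
move=> u0 uv; elim: n => [|n IH]; first by rewrite !expr0.
by rewrite !exprS ler_pM // exprn_ge0.
Qed.

End Arith.

Theorem theorem27 (R : realType) (T : finType) (mX mY : T -> T -> R)
    (muX muY : T -> R) :
  is_kernel mX -> is_kernel mY ->
  irreducible mX -> aperiodic mX -> irreducible mY -> aperiodic mY ->
  stationary mX muX -> (forall mu, stationary mX mu -> mu = muX) ->
  stationary mY muY -> (forall mu, stationary mY mu -> mu = muY) ->
  exists rho : R, 0 <= rho < 1 /\
    forall d : T -> T -> R, pseudometric d ->
    forall (k : nat) (i j : T),
      `|Citer mX mY d k i j - dWLinf mX mY muX muY d| <= 2 * rho ^+ k * supnorm d.
Proof.
move=> HX HY IX AX IY AY SX _ SY _.
have [NX [aX [NX0 [/andP [aX0 aX1] HNX]]]] := exists_Na HX IX AX.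
have [NY [aY [NY0 [/andP [aY0 aY1] HNY]]]] := exists_Na HY IY AY.
set N := maxn NX NY.
set a : R := Num.max (Num.max aX aY) (1/2).
have N0 : (0 < N)%N by rewrite /N leq_max NX0.
have ah : 1/2 <= a by rewrite /a le_max lexx orbT.
have aXa : aX <= a by rewrite /a !le_max lexx.
have aYa : aY <= a by rewrite /a !le_max lexx orbT.
have a1 : a < 1.
  rewrite /a !gt_max aX1 aY1 /=; lra.
have a0 : 0 <= a by lra.
have DXN : forall i i', Dn mX N i i' <= a.
  by move=> i i'; apply: le_trans (HNX N (leq_maxl _ _) i i') aXa.
have DYN : forall i i', Dn mY N i i' <= a.
  by move=> i i'; apply: le_trans (HNY N (leq_maxr _ _) i i') aYa.
have N2 : (0 : R) < (2 * N)%:R by rewrite ltr0n muln_gt0.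
set x := (1 - a) / (2 * N)%:R.
have x0 : 0 < x by rewrite divr_gt0 // subr_gt0.
have x1 : x <= 1.
  rewrite ler_pdivrMr // mul1r.
  apply: le_trans (_ : 1 <= _); first lra.
  by rewrite ler1n muln_gt0.
set rho := 1 - x.
have Hrho : a <= rho ^+ (2 * N).
  have := bernoulli (2 * N) (ltW x0) x1.
  by rewrite /x mulrC divfK ?gt_eqF //; lra.
exists rho; split; first by apply/andP; split; rewrite /rho; lra.
have rho0 : 0 <= rho by rewrite /rho; lra.
have rho1 : rho <= 1 by rewrite /rho; lra.
move=> d [dd [dsym dtri]] k i j.
set B := supnorm d.
have d0 : forall x y, 0 <= d x y.
  move=> u v; have := dtri u v u; rewrite dd dsym; lra.
have dB : forall x y, d x y <= B.
  move=> u v; rewrite /B /supnorm.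
  apply: le_trans (_ : \big[Num.max/0]_(j0 : T) `|d u j0| <= _); last first.
    exact: (le_bigmax _ (fun i0 => \big[Num.max/0]_(j0 : T) `|d i0 j0|)).
  apply: le_trans (_ : `|d u v| <= _); first by rewrite ger0_norm.
  exact: (le_bigmax _ (fun j0 => `|d u j0|)).
have B0 : 0 <= B by apply: le_trans (d0 i i) (dB i i).
have hAX : forall x x' y, d x y - d x' y <= D0 x x' * B.
  move=> u u' v; rewrite /D0; case: eqP => [->|_]; first by rewrite subrr mul0r.
  by rewrite mul1r; have := d0 u' v; have := dB u v; lra.
have hAY : forall x y y', d x y - d x y' <= D0 y y' * B.
  move=> u v v'; rewrite /D0; case: eqP => [->|_]; first by rewrite subrr mul0r.
  by rewrite mul1r; have := d0 u v'; have := dB u v; lra.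
set q := (k %/ N)%N.
have Hk : k = (q * N + k %% N)%N by rewrite /q -divn_eq.
have DXk : forall x x', Dn mX k x x' <= a ^+ q.
  by move=> u u'; rewrite Hk; apply: Dn_geom.
have DYk : forall x x', Dn mY k x x' <= a ^+ q.
  by move=> u u'; rewrite Hk; apply: Dn_geom.
set g := Citer mX mY d k.
have pairb : forall x y x' y', g x y - g x' y' <= (a ^+ q + a ^+ q) * B.
  move=> u v u' v'.
  have h1 := lemmaAX HX HY hAX k u u' v.
  have h2 := lemmaAY HX HY hAY k u' v v'.
  have h3 : Dn mX k u u' * B <= a ^+ q * B by apply: ler_wpM2r.
  have h4 : Dn mY k v v' * B <= a ^+ q * B by apply: ler_wpM2r.
  rewrite mulrDl; rewrite -/g in h1 h2; lra.
have gb : forall x y, 0 <= g x y <= B.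
  move=> u v; apply: Citer_bounds => // u1 v1; by rewrite d0 dB.
case: (posnP q) => [q0|qpos].
  have Hc := c_close HX HY SX SY (G := g i j) (D := B) (d := d) (k := k) _.
  apply: le_trans (Hc _) _.
    by move=> u v; rewrite -/g; have := gb u v; have := gb i j; case/andP => ? ?; case/andP => ? ?; apply/andP; split; lra.
  have : 1/2 <= rho ^+ k.
    apply: le_trans ah _; apply: le_trans Hrho _; apply: ler_wiXn2l => //.
    exact: arith1.
  move=> h; have : B <= 2 * rho ^+ k * B.
    rewrite -[X in X <= _]mul1r; apply: ler_wpM2r => //; lra.
  done.
have Hc := c_close HX HY SX SY (G := g i j) (D := (a ^+ q + a ^+ q) * B) (d := d) (k := k) _.
apply: le_trans (Hc _) _.
  move=> u v; rewrite -/g; apply/andP; split.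
    by have := pairb i j u v; lra.
  by have := pairb u v i j; lra.
have rk : rho ^+ (2 * N * q) <= rho ^+ k.
  apply: ler_wiXn2l => //.
  exact: arith2.
have : a ^+ q <= rho ^+ k.
  apply: le_trans _ rk; rewrite exprM; apply: expr_mono => //.
move=> h; apply: ler_wpM2r => //; lra.
Qed.
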